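(* Let $\Lambda$ be a ring, let $\operatorname{mod}\Lambda$ be the category of finite length right $\Lambda$-modules, and let $T,M\in\operatorname{mod}\Lambda$. If $\varepsilon\colon 0\to T'\to E\to M\to0$ and $\eta\colon 0\to T''\to F\to M\to0$ are universal $\operatorname{add}(T)$-extensions of $M$, then $E\cong F$ modulo $\operatorname{add}(T)$, i.e. $E$ and $F$ are isomorphic as objects of the quotient category $\operatorname{mod}\Lambda/\operatorname{add}(T)$.
   Context: $\operatorname{add}(T)$ is the full subcategory of direct sums of direct summands of $T$. An element $\varepsilon\in\operatorname{Ext}^1(M,T')$ with $T'\in\operatorname{add}(T)$ is a universal $\operatorname{add}(T)$-extension of $M$ if the map $\operatorname{Hom}(T',T)\to\operatorname{Ext}^1(M,T)$, $\phi\mapsto\phi\varepsilon$ (push-out along $\phi$), is surjective. The quotient category $\operatorname{mod}\Lambda/\operatorname{add}(T)$ has the same objects as $\operatorname{mod}\Lambda$ and morphisms modulo those factoring through an object of $\operatorname{add}(T)$. *)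

(* Defs.v *)
(* Right Lambda-modules = left modules over the converse ring Lambda^c. *)
From HB Require Import structures.
From mathcomp Require Import all_boot all_order all_algebra.
Set Implicit Arguments. Unset Strict Implicit. Unset Printing Implicit Defensive.
Import GRing.Theory.
Local Open Scope ring_scope.

Section Defs.
Variable L : pzRingType.
Notation rmod := (lmodType L^c).

Definition submodule (V : rmod) (S : V -> Prop) : Prop :=
  [/\ S 0, (forall u v, S u -> S v -> S (u + v)) & (forall (a : L^c) v, S v -> S (a *: v)) ].

Definition subset_of (V : Type) (A B : V -> Prop) := forall v, A v -> B v.

Definition finite_length (V : rmod) : Prop :=
  exists (n : nat) (S : nat -> V -> Prop),
    [/\ (forall i, submodule (S i)),
        (forall v, S 0%N v <-> v = 0),
        (forall v, S n v) &
        (forall i, (i < n)%N ->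
           [/\ subset_of (S i) (S i.+1),
               (exists v, S i.+1 v /\ ~ S i v) &
               (forall N : V -> Prop, submodule N -> subset_of (S i) N ->
                  subset_of N (S i.+1) -> subset_of N (S i) \/ subset_of (S i.+1) N)])].

(* X in add(T): X is a direct summand of T^n for some n, i.e. there are
   s_k : X -> T and r_k : T -> X (k < n) with sum_k r_k o s_k = id_X *)
Definition in_add (T X : rmod) : Prop :=
  exists (n : nat) (s : 'I_n -> {linear X -> T}) (r : 'I_n -> {linear T -> X}),
    forall x, \sum_(k < n) r k (s k x) = x.

Definition short_exact (A B C : rmod) (i : {linear A -> B}) (p : {linear B -> C}) : Prop :=
  [/\ injective i, (forall c, exists b, p b = c) &
      (forall b, p b = 0 <-> exists a, i a = b)].

(* eps : 0 -> T' -i-> E -p-> M -> 0 is a universal add(T)-extension of M: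
   T' in add(T), and the map Hom(T',T) -> Ext^1(M,T), phi |-> phi eps, is
   surjective.  The push-out phi eps is equivalent to an extension
   0 -> T -j-> X -q-> M -> 0 iff there is psi : E -> X with
   psi o i = j o phi and q o psi = p. *)
Definition universal_add_ext (T M T' E : rmod)
    (i : {linear T' -> E}) (p : {linear E -> M}) : Prop :=
  [/\ in_add T T', short_exact i p &
      forall (X : rmod) (j : {linear T -> X}) (q : {linear X -> M}),
        finite_length X -> short_exact j q ->
        exists (phi : {linear T' -> T}) (psi : {linear E -> X}),
          (forall t, psi (i t) = j (phi t)) /\ (forall e, q (psi e) = p e)].

Definition factors_through_add (T V W : rmod) (f : V -> W) : Prop :=
  exists (Z : rmod) (h : {linear V -> Z}) (g : {linear Z -> W}),
    finite_length Z /\ in_add T Z /\ forall v, f v = g (h v).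

Definition iso_mod_add (T V W : rmod) : Prop :=
  exists (f : {linear V -> W}) (g : {linear W -> V}),
    factors_through_add T (fun v => g (f v) - v) /\
    factors_through_add T (fun w => f (g w) - w).
End Defs.

(* Main.v *)
Require Import Defs.
From HB Require Import structures.
From mathcomp Require Import all_boot all_order all_algebra.
From Stdlib Require Import ClassicalEpsilon FunctionalExtensionality PropExtensionality.
Set Implicit Arguments. Unset Strict Implicit. Unset Printing Implicit Defensive.
Import GRing.Theory.
Local Open Scope ring_scope.

Section ML.
Variables (R : pzRingType) (U W : lmodType R) (f : U -> W) (H : linear f).
Definition mklin of linear f := f.
HB.instance Definition _ := GRing.isLinear.Build R U W *:%R (mklin H) H.
End ML.
Record subm (R : pzRingType) (V : lmodType R) := Subm {
  sp : V -> Prop;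
  sp0 : sp 0;
  spD : forall u v, sp u -> sp v -> sp (u + v);
  spZ : forall (a : R) v, sp v -> sp (a *: v) }.

Section Quot.
Variables (R : pzRingType) (V : lmodType R) (S : subm V).
Local Notation N := (sp S).
Let N0 : N 0 := sp0 S.
Let ND : forall u v, N u -> N v -> N (u + v) := @spD _ _ S.
Let NZ : forall (a : R) v, N v -> N (a *: v) := @spZ _ _ S.

Lemma NN v : N v -> N (- v).
Proof. by move=> h; rewrite -scaleN1r; apply: NZ. Qed.
Lemma NB u v : N u -> N v -> N (u - v).
Proof. by move=> hu hv; apply: ND => //; apply: NN. Qed.

Definition rep (x : V) : V := epsilon (inhabits 0) (fun y => N (x - y)).
Lemma repP x : N (x - rep x).
Proof. by apply: (epsilon_spec (inhabits 0) (fun y => N (x - y))); exists x; rewrite subrr. Qed.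
Lemma rep_eq x y : N (x - y) -> rep x = rep y.
Proof.
move=> h; rewrite /rep; congr epsilon; apply: functional_extensionality => z.
apply: propositional_extensionality; split=> hz.
  have -> : y - z = (x - z) - (x - y) by rewrite opprB [RHS]addrC addrA subrK.
  exact: NB.
have -> : x - z = (x - y) + (y - z) by rewrite addrA subrK.
exact: ND.
Qed.
Lemma rep_idem x : rep (rep x) = rep x.
Proof. by apply/esym/rep_eq/repP. Qed.
Lemma rep_eqP x y : rep x = rep y -> N (x - y).
Proof.
move=> e; have := ND (repP x) (NN (repP y)).
by rewrite e opprB addrA subrK.
Qed.

Definition Q := {x : V | rep x == x}.
HB.instance Definition _ := [isSub for (@sval V (fun x => rep x == x))].
HB.instance Definition _ := [Choice of Q by <:].

Definition mk (x : V) : Q := exist _ (rep x) (introT eqP (rep_idem x)).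
Lemma mk_val (a : Q) : mk (val a) = a.
Proof. by case: a => x hx; apply: val_inj => /=; apply/eqP. Qed.
Lemma mk_eq x y : N (x - y) -> mk x = mk y.
Proof. by move=> h; apply: val_inj => /=; apply: rep_eq. Qed.
Lemma mk_eqP x y : mk x = mk y -> N (x - y).
Proof. by move=> h; apply: rep_eqP; have := congr1 val h. Qed.
Lemma val_mk x : N (x - val (mk x)).
Proof. exact: repP. Qed.

Definition zeroQ := mk 0.
Definition addQ (a b : Q) := mk (val a + val b).
Definition oppQ (a : Q) := mk (- val a).
Definition scaleQ (c : R) (a : Q) := mk (c *: val a).

Lemma val_mkN x : N (val (mk x) - x).
Proof. by have := NN (val_mk x); rewrite opprB. Qed.

Lemma addQ_mk x y : addQ (mk x) (mk y) = mk (x + y).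
Proof.
apply: mk_eq; have := ND (val_mkN x) (val_mkN y).
by rewrite opprD addrACA.
Qed.
Lemma oppQ_mk x : oppQ (mk x) = mk (- x).
Proof. by apply: mk_eq; have := NN (val_mkN x); rewrite opprB addrC opprK. Qed.
Lemma scaleQ_mk c x : scaleQ c (mk x) = mk (c *: x).
Proof. by apply: mk_eq; have := NZ c (val_mkN x); rewrite scalerBr. Qed.

Lemma addQA : associative addQ.
Proof. by move=> a b c; rewrite -[a]mk_val -[b]mk_val -[c]mk_val !addQ_mk addrA. Qed.
Lemma addQC : commutative addQ.
Proof. by move=> a b; rewrite -[a]mk_val -[b]mk_val !addQ_mk addrC. Qed.
Lemma add0Q : left_id zeroQ addQ.
Proof. by move=> a; rewrite -[a]mk_val /zeroQ addQ_mk add0r. Qed.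
Lemma addNQ : left_inverse zeroQ oppQ addQ.
Proof. by move=> a; rewrite -[a]mk_val oppQ_mk addQ_mk addNr. Qed.
HB.instance Definition _ := GRing.isZmodule.Build Q addQA addQC add0Q addNQ.
Lemma addE (a b : Q) : a + b = addQ a b. Proof. by []. Qed.
Lemma oppE (a : Q) : - a = oppQ a. Proof. by []. Qed.
Lemma zeroE : (0 : Q) = mk 0. Proof. by []. Qed.

Lemma scaleQA a b v : scaleQ a (scaleQ b v) = scaleQ (a * b) v.
Proof. by rewrite -[v]mk_val !scaleQ_mk scalerA. Qed.
Lemma scale1Q : left_id 1 scaleQ.
Proof. by move=> v; rewrite -[v]mk_val !scaleQ_mk scale1r. Qed.
Lemma scaleQDr : right_distributive scaleQ +%R.
Proof. by move=> a u v; rewrite -[u]mk_val -[v]mk_val !addE (addQ_mk (val u) (val v)) !scaleQ_mk addQ_mk scalerDr. Qed.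
Lemma scaleQDl v : {morph scaleQ^~ v: a b / a + b}.
Proof. by move=> a b; rewrite -[v]mk_val addE !scaleQ_mk addQ_mk scalerDl. Qed.
HB.instance Definition _ := GRing.Zmodule_isLmodule.Build R Q scaleQA scale1Q scaleQDr scaleQDl.
Lemma scaleE c (a : Q) : c *: a = scaleQ c a. Proof. by []. Qed.

Lemma mk_lin : linear mk.
Proof. by move=> c x y; rewrite addE -addQ_mk scaleE -scaleQ_mk. Qed.
Lemma mk0 : mk 0 = 0. Proof. by []. Qed.
End Quot.

Lemma ext_fl (L : pzRingType) (A B C : lmodType L^c) (j : {linear A -> B}) (q : {linear B -> C}) :
  short_exact j q -> finite_length A -> finite_length C -> finite_length B.
Proof.
move=> [jinj qsurj ker] [n [SA [SAsub SA0 SAn SAstep]]] [m [SC [SCsub SC0 SCm SCstep]]].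
pose SB (i : nat) (b : B) : Prop :=
  if (i <= n)%N then exists a, SA i a /\ j a = b else SC (i - n)%N (q b).
have SBl : forall i b, (i <= n)%N -> SB i b <-> exists a, SA i a /\ j a = b.
  by move=> i b hi; rewrite /SB hi.
have SBr : forall i b, (n <= i)%N -> SB i b <-> SC (i - n)%N (q b).
  move=> i b hi; rewrite /SB; case: ifP => hin; last by [].
  have -> : i = n by apply/eqP; rewrite eqn_leq hin hi.
  rewrite subnn; split => [|hq]; last first.
    by have [a ha] := (ker b).1 (proj1 (SC0 _) hq); exists a; split.
  move=> [a [_ <-]]; apply/SC0; apply/(ker _).2; by exists a.
have qzero : forall k x, q x = 0 -> SC k (q x).
  by move=> k x ->; case: (SCsub k).
exists (n + m)%N, SB; split.
- move=> i; case: (leqP i n) => hi.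
    split.
    + by apply/SBl => //; exists 0; split; [case: (SAsub i) | rewrite linear0].
    + move=> u v /SBl-/(_ hi) [a [ha <-]] /SBl-/(_ hi) [b [hb <-]].
      apply/SBl => //; exists (a + b); split; last by rewrite linearD.
      by case: (SAsub i) => _ hD _; apply: hD.
    + move=> c v /SBl-/(_ hi) [a [ha <-]].
      apply/SBl => //; exists (c *: a); split; last by rewrite linearZ.
      by case: (SAsub i) => _ _ hZ; apply: hZ.
  have hi' : (n <= i)%N by apply: ltnW.
  split.
    + by apply/SBr => //; apply: qzero; rewrite linear0.
    + move=> u v /SBr-/(_ hi') hu /SBr-/(_ hi') hv.
      apply/SBr => //; rewrite linearD.
      by case: (SCsub (i - n)%N) => _ hD _; apply: hD.
    + move=> c v /SBr-/(_ hi') hv.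
      apply/SBr => //; rewrite linearZ.
      by case: (SCsub (i - n)%N) => _ _ hZ; apply: hZ.
- move=> v; split.
    by move=> /SBl-/(_ (leq0n n)) [a [/SA0 -> <-]]; rewrite linear0.
  by move=> ->; apply/SBl => //; exists 0; split; [apply/SA0 | rewrite linear0].
- by move=> v; apply/SBr; [apply: leq_addr | rewrite addKn; apply: SCm].
- move=> i hi; case: (ltnP i n) => hin.
  + have hi1 : (i <= n)%N by apply: ltnW.
    have [st1 [v [hv1 hv0]] mx] := SAstep i hin.
    split.
    * move=> b /SBl-/(_ hi1) [a [ha <-]]; apply/SBl => //.
      by exists a; split => //; apply: st1.
    * exists (j v); split; first by apply/SBl => //; exists v.
      move=> /SBl-/(_ hi1) [a [ha /jinj e]]; by apply: hv0; rewrite -e.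
    * move=> N [N0 ND NZ] s1 s2.
      have := mx (fun a => N (j a)).
      case.
      - split; first by rewrite linear0.
        + by move=> u w hu hw; rewrite linearD; apply: ND.
        + by move=> c w hw; rewrite linearZ; apply: NZ.
      - by move=> a ha; apply: s1; apply/SBl => //; exists a.
      - move=> a /s2/SBl-/(_ hin) [a' [ha' /jinj e]]; by rewrite -e.
      - move=> h; left => b hb; have /s2/SBl-/(_ hin) [a [ha e]] := hb.
        apply/SBl => //; exists a; split => //; apply: h; by rewrite e.
      - move=> h; right => b /SBl-/(_ hin) [a [ha <-]]; exact: h.
  + have hk : (i - n < m)%N by rewrite ltn_subLR.
    have hi1 : (n <= i.+1)%N by apply: leqW.
    have e1 : (i.+1 - n)%N = (i - n).+1 by rewrite subSn.
    have [st1 [c [hc1 hc0]] mx] := SCstep _ hk.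
    split.
    * move=> b /SBr-/(_ hin) hb; apply/SBr => //; rewrite e1; exact: st1.
    * have [b hb] := qsurj c.
      exists b; split; first by apply/SBr => //; rewrite e1 hb.
      by move=> /SBr-/(_ hin); rewrite hb.
    * move=> N [N0 ND NZ] s1 s2.
      have := mx (fun c => exists b, N b /\ q b = c).
      case.
      - split; first by exists 0; rewrite linear0.
        + move=> u w [b [hb <-]] [b' [hb' <-]]; exists (b + b'); rewrite linearD; split => //.
          exact: ND.
        + move=> a w [b [hb <-]]; exists (a *: b); rewrite linearZ; split => //.
          exact: NZ.
      - move=> c' hc'; have [b hb] := qsurj c'; exists b; split => //.
        apply: s1; apply/SBr => //; by rewrite hb.
      - move=> c' [b [hb <-]]; have := s2 _ hb; move/SBr => /(_ hi1); by rewrite e1.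
      - move=> h; left => b hb; apply/SBr => //; apply: h; by exists b.
      - move=> h; right => v /SBr-/(_ hi1); rewrite e1 => /h [b [hb e]].
        have hvb : N (v - b).
          apply: s1; apply/SBr => //; apply: qzero; by rewrite linearB e subrr.
        by have := ND _ _ hvb hb; rewrite subrK.
Qed.

Lemma pairD (A B : zmodType) (a c : A) (b d : B) : (a, b) + (c, d) = (a + c, b + d). Proof. by []. Qed.
Lemma pairN (A B : zmodType) (a : A) (b : B) : - (a, b) = (- a, - b). Proof. by []. Qed.
Lemma pair0 (A B : zmodType) : (0 : A * B) = (0, 0). Proof. by []. Qed.
Lemma pairZ (R : pzRingType) (A B : lmodType R) c (a : A) (b : B) : c *: (a, b) = (c *: a, c *: b). Proof. by []. Qed.
Lemma sndB (A B : zmodType) (x y : A * B) : (x - y).2 = x.2 - y.2. Proof. by []. Qed.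

Section PO.
Variables (L : pzRingType) (T F T2 M : lmodType L^c)
  (s : {linear T2 -> T}) (i2 : {linear T2 -> F}) (p2 : {linear F -> M}).

Definition PNp (v : T * F) : Prop := exists t, v = (s t, - i2 t).
Lemma PN0 : PNp 0.
Proof. by exists 0; rewrite !linear0 ?oppr0. Qed.
Lemma PND u v : PNp u -> PNp v -> PNp (u + v).
Proof. move=> [t ->] [t' ->]; exists (t + t'); by rewrite pairD (linearD s) (linearD i2) opprD. Qed.
Lemma PNZ (a : L^c) v : PNp v -> PNp (a *: v).
Proof. move=> [t ->]; exists (a *: t); by rewrite pairZ (linearZ_LR s) (linearZ_LR i2) scalerN. Qed.
Definition PN : subm (T * F)%type := Subm PN0 PND PNZ.
Definition PX := Q PN.

Definition jf (t : T) : PX := mk PN (t, 0).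
Lemma jf_lin : linear jf.
Proof. by move=> a x y; rewrite /jf -mk_lin pairZ pairD scaler0 addr0. Qed.
Definition sf (f : F) : PX := mk PN (0, f).
Lemma sf_lin : linear sf.
Proof. by move=> a x y; rewrite /sf -mk_lin pairZ pairD scaler0 addr0. Qed.

Definition jL : {linear T -> PX} := mklin jf_lin.
Definition sL : {linear F -> PX} := mklin sf_lin.
Lemma sf_i2 t : sL (i2 t) = jL (s t).
Proof.
apply: mk_eq; exists (- t); rewrite pairN pairD !linearN opprK.
by rewrite sub0r subr0.
Qed.

Hypothesis Hp : forall t, p2 (i2 t) = 0.
Definition qf (a : PX) : M := p2 (val a).2.
Lemma qf_mk x : qf (mk PN x) = p2 x.2.
Proof.
have [t ht] := val_mk PN x.
have e : p2 (x.2 - (val (mk PN x)).2) = p2 (- i2 t) := congr1 (fun v => p2 v.2) ht.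
move: e; rewrite linearB linearN Hp oppr0.
by move/eqP; rewrite subr_eq0 => /eqP ->.
Qed.
Lemma qf_lin : linear qf.
Proof.
move=> a x y; rewrite -[x](mk_val) -[y](mk_val) -mk_lin !qf_mk.
by rewrite linearD linearZ.
Qed.
Definition qL : {linear PX -> M} := mklin qf_lin.
Lemma qL_mk x : qL (mk PN x) = p2 x.2. Proof. exact: qf_mk. Qed.
Hypothesis Hinj : injective i2.
Hypothesis Hsurj : forall c, exists b, p2 b = c.
Hypothesis Hker : forall b, p2 b = 0 <-> exists a, i2 a = b.
Lemma po_exact : short_exact jL qL.
Proof.
split.
- move=> x y e; have [t ht] := @mk_eqP _ _ PN (x, 0) (y, 0) e.
  have e1 : x - y = s t := congr1 fst ht.
  have e2 : (0 : F) - 0 = - i2 t := congr1 snd ht.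
  have hi : i2 t = 0 by apply/eqP; rewrite -oppr_eq0 -e2 subrr.
  have t0 : t = 0 by apply: Hinj; rewrite hi linear0.
  by apply/eqP; rewrite -subr_eq0 e1 t0 linear0.
- move=> c; have [b hb] := Hsurj c; exists (sL b).
  by rewrite -hb; exact: (qL_mk (0, b)).
- move=> b; rewrite -[b]mk_val; case: (val b) => x1 x2; rewrite qL_mk /=; split.
    move=> /Hker [a ha]; exists (x1 + s a); rewrite /jL /= /mklin /jf.
    apply: mk_eq; exists a; rewrite pairN pairD -ha; congr pair.
      by rewrite addrAC subrr add0r.
    by rewrite add0r.
  move=> [a ha]; have -> : p2 x2 = qL (mk PN (x1, x2)) by rewrite qL_mk.
  by rewrite -ha; have := qL_mk (a, 0); rewrite linear0.
Qed.
End PO.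

Lemma qL_sL (L : pzRingType) (T F T2 M : lmodType L^c) (s : {linear T2 -> T})
  (i2 : {linear T2 -> F}) (p2 : {linear F -> M}) (Hp : forall t, p2 (i2 t) = 0) y :
  qL s Hp (sL s i2 y) = p2 y.
Proof. exact: (qL_mk s Hp (0, y)). Qed.

Lemma dir (L : pzRingType) (T M T' E T'' F : lmodType L^c)
  (i : {linear T' -> E}) (p : {linear E -> M})
  (i' : {linear T'' -> F}) (p' : {linear F -> M}) :
  finite_length T -> finite_length M -> universal_add_ext T i p ->
  in_add T T'' -> short_exact i' p' ->
  exists f : {linear E -> F}, forall e, p' (f e) = p e.
Proof.
move=> flT flM [_ [iinj psurj pker] univ] [n [s [r hsr]]] [i'inj p'surj p'ker].
have Hp : forall t, p' (i' t) = 0 by move=> t; apply/p'ker; exists t.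
have ex k := po_exact (s k) Hp i'inj p'surj p'ker.
have hpsi : forall k, exists psi : {linear E -> PX (s k) i'},
    forall e, qL (s k) Hp (psi e) = p e.
  move=> k; have [phi [psi [_ h]]] := univ _ _ _ (ext_fl (ex k) flT flM) (ex k).
  by exists psi.
pose psi k := proj1_sig (constructive_indefinite_description _ (hpsi k)).
have psiP : forall k e, qL (s k) Hp (psi k e) = p e.
  by move=> k; exact: (proj2_sig (constructive_indefinite_description _ (hpsi k))).
pose f0 e := epsilon (inhabits 0) (fun y => p' y = p e).
have f0P : forall e, p' (f0 e) = p e.
  by move=> e; apply: (epsilon_spec (inhabits 0) (fun y => p' y = p e)); exact: p'surj.
have tex : forall k e y, p' y = p e ->
    exists t, jL (s k) i' t = psi k e - sL (s k) i' y.
  move=> k e y hy; have [_ _ kk] := ex k; apply/kk.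
  by rewrite linearB psiP qL_sL hy subrr.
pose tt k e := epsilon (inhabits 0)
  (fun t => jL (s k) i' t = psi k e - sL (s k) i' (f0 e)).
have ttP : forall k e, jL (s k) i' (tt k e) = psi k e - sL (s k) i' (f0 e).
  move=> k e; apply: (epsilon_spec (inhabits 0)
     (fun t => jL (s k) i' t = psi k e - sL (s k) i' (f0 e))).
  exact: tex.
pose f e := f0 e + i' (\sum_(k < n) r k (tt k e)).
have char : forall e y (u : 'I_n -> T), p' y = p e ->
    (forall k, jL (s k) i' (u k) = psi k e - sL (s k) i' y) ->
    f e = y + i' (\sum_(k < n) r k (u k)).
  move=> e y u hy hu.
  have [w hw] : exists w, i' w = f0 e - y.
    by apply/p'ker; rewrite linearB f0P hy subrr.
  have ef : f0 e = y + i' w by rewrite hw addrC subrK.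
  have htt : forall k, tt k e = u k - s k w.
    move=> k; have [jinj _ _] := ex k; apply: jinj.
    rewrite ttP !linearB hu ef linearD sf_i2.
    by rewrite opprD addrA.
  rewrite /f (eq_bigr (fun k => r k (u k) - r k (s k w))); last first.
    by move=> k _; rewrite htt linearB.
  rewrite sumrB hsr linearB ef.
  by rewrite -addrA [i' w + _]addrC subrK.
have flin : linear f.
  move=> a e1 e2.
  rewrite (char _ (a *: f0 e1 + f0 e2) (fun k => a *: tt k e1 + tt k e2)).
  - rewrite (eq_bigr (fun k => a *: r k (tt k e1) + r k (tt k e2))); last first.
      by move=> k _; rewrite linearP.
    rewrite big_split /= -scaler_sumr linearP scalerDr.
    by rewrite addrACA.
  - by rewrite linearP !f0P linearP.
  - move=> k; rewrite (linearP (jL (s k) i')) !ttP (linearP (psi k)) (linearP (sL (s k) i')).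
    by rewrite scalerBr opprD addrACA.
exists (mklin flin) => e /=.
by rewrite /mklin /f linearD f0P Hp addr0.
Qed.

Lemma fac (L : pzRingType) (T M T' E : lmodType L^c)
  (i : {linear T' -> E}) (p : {linear E -> M}) (d : E -> E) :
  linear d -> short_exact i p -> in_add T T' -> finite_length T' ->
  (forall e, p (d e) = 0) -> factors_through_add T d.
Proof.
move=> dlin [iinj _ pker] addT flT' hd.
pose h e := epsilon (inhabits 0) (fun t => i t = d e).
have hP : forall e, i (h e) = d e.
  move=> e; apply: (epsilon_spec (inhabits 0) (fun t => i t = d e)).
  by apply/pker; exact: hd.
have hlin : linear h.
  by move=> a x y; apply: iinj; rewrite linearP !hP dlin.
exists T', (mklin hlin), i; split => //; split => // v.
by rewrite /= /mklin hP.
Qed.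

Theorem corollary1p3 (L : pzRingType) (T M T' E T'' F : lmodType L^c)
  (i : {linear T' -> E}) (p : {linear E -> M})
  (i' : {linear T'' -> F}) (p' : {linear F -> M}) :
  finite_length T -> finite_length M ->
  finite_length T' -> finite_length E -> finite_length T'' -> finite_length F ->
  universal_add_ext T i p -> universal_add_ext T i' p' ->
  iso_mod_add T E F.
Proof.
move=> flT flM flT' flE flT'' flF U1 U2.
have U1' := U1; have U2' := U2.
case: U1' => add1 ex1 _; case: U2' => add2 ex2 _.
have [f hf] := dir flT flM U1 add2 ex2.
have [g hg] := dir flT flM U2 add1 ex1.
exists f, g; split.
- apply: (fac (i := i) (p := p)) => //.
    by move=> a x y; rewrite (linearP f) (linearP g) scalerBr opprD addrACA.
  by move=> e; rewrite linearB hg hf subrr.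
- apply: (fac (i := i') (p := p')) => //.
    by move=> a x y; rewrite (linearP g) (linearP f) scalerBr opprD addrACA.
  by move=> e; rewrite linearB hf hg subrr.
Qed.
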